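(* Let $V\in\mathbb{R}^{d\times d}$ be symmetric positive definite, let $\hat\theta\in\mathbb{R}^d$ and $\beta\ge 0$, and let $\mathcal{E}=\{\theta\in\mathbb{R}^d:\|\theta-\hat\theta\|_V\le\beta\}$. Assume $\|\hat\theta\|_V>\beta$ and put $\phi=\sqrt{\|\hat\theta\|_V^2-\beta^2}>0$. Then $0\notin\mathcal{E}$, and for every $\theta\in\mathcal{E}$, $$\Big\|\tfrac{\theta}{\|\theta\|}\Big\|_V\le\frac{\|\hat\theta\|_{V^2}}{\phi}.$$
   Context: $\|\cdot\|$ is the Euclidean norm. For a symmetric positive definite matrix $A$, $\|x\|_A=\sqrt{x^\top Ax}$; in particular $\|\hat\theta\|_{V^2}=\sqrt{\hat\theta^\top V^2\hat\theta}=\|V\hat\theta\|$. The vector $\theta/\|\theta\|$ is the maximizer of $x\mapsto\langle x,\theta\rangle$ over the unit sphere $\{x:\|x\|=1\}$. *)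

(* Defs.v *)
From HB Require Import structures.
From mathcomp Require Import all_boot all_order all_algebra.
Set Implicit Arguments. Unset Strict Implicit. Unset Printing Implicit Defensive.
Import Order.TTheory GRing.Theory Num.Theory.
Local Open Scope ring_scope.

Definition qform (R : ringType) (d : nat) (A : 'M[R]_d) (x : 'cV[R]_d) : R :=
  (x^T *m A *m x) 0 0.

Definition mnorm (R : rcfType) (d : nat) (A : 'M[R]_d) (x : 'cV[R]_d) : R :=
  Num.sqrt (qform A x).

Definition enorm (R : rcfType) (d : nat) (x : 'cV[R]_d) : R :=
  Num.sqrt (\sum_(i < d) x i 0 ^+ 2).

Definition spd (R : numDomainType) (d : nat) (A : 'M[R]_d) : Prop :=
  A^T = A /\ forall x : 'cV[R]_d, x != 0 -> 0 < qform A x.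

Definition ellipsoid (R : rcfType) (d : nat) (V : 'M[R]_d) (thetahat : 'cV[R]_d)
  (beta : R) : 'cV[R]_d -> Prop :=
  fun theta => mnorm V (theta - thetahat) <= beta.

(* Main.v *)
Require Import Defs.
From HB Require Import structures.
From mathcomp Require Import all_boot all_order all_algebra.
From mathcomp Require Import ring lra.
Import Order.TTheory GRing.Theory Num.Theory.
Local Open Scope ring_scope.

Definition Bf {R : rcfType} {d : nat} (x y : 'cV[R]_d) : R := (x^T *m y) 0 0.

Lemma mul_self_ge0 {R : rcfType} (x : R) : 0 <= x * x.
Proof. by rewrite -expr2 sqr_ge0. Qed.

Lemma Bsum {R : rcfType} {d : nat} (x y : 'cV[R]_d) :
  Bf x y = \sum_i x i 0 * y i 0.
Proof. by rewrite /Bf !mxE; apply: eq_bigr => i _; rewrite !mxE. Qed.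

Lemma CS {R : rcfType} {d : nat} (x y : 'cV[R]_d) :
  Bf x y ^+ 2 <= Bf x x * Bf y y.
Proof.
set a := Bf x x; set b := Bf y y; set c := Bf x y.
have key : forall t, 0 <= b - 2 * t * c + t ^+ 2 * a.
  move=> t.
  have -> : b - 2 * t * c + t ^+ 2 * a = \sum_i (y i 0 - t * x i 0) ^+ 2.
    rewrite (eq_bigr (fun i => (y i 0 * y i 0 - (2 * t) * (x i 0 * y i 0))
                 + t ^+ 2 * (x i 0 * x i 0))); last by move=> i _; ring.
    by rewrite big_split /= sumrB -!mulr_sumr /a /b /c !Bsum.
  by apply: sumr_ge0 => i _; apply: sqr_ge0.
have a0 : 0 <= a by rewrite /a Bsum; apply: sumr_ge0 => i _; apply: mul_self_ge0.
have [a0e|an0] := eqVneq a 0.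
  have H : \sum_i x i 0 * x i 0 = 0 by rewrite -Bsum.
  have x0 : forall i, x i 0 = 0.
    move=> i; apply/eqP; rewrite -sqrf_eq0 expr2; apply/eqP.
    exact: (psumr_eq0P (fun i _ => mul_self_ge0 (x i 0)) H).
  rewrite a0e mul0r /c Bsum big1; first by rewrite expr0n.
  by move=> i _; rewrite x0 mul0r.
have ap : 0 < a by rewrite lt_def an0 a0.
have := key (c / a).
have -> : b - 2 * (c / a) * c + (c / a) ^+ 2 * a = b - c ^+ 2 / a.
  by field; rewrite an0.
rewrite subr_ge0 ler_pdivrMr // => h; by rewrite mulrC.
Qed.

Lemma qform_ge0 {R : rcfType} {d : nat} (V : 'M[R]_d) (x : 'cV[R]_d) :
  spd V -> 0 <= qform V x.
Proof.
move=> [_ hV]; have [->|xn0] := eqVneq x 0.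
  by rewrite /qform trmx0 !mul0mx mxE.
exact: ltW (hV _ xn0).
Qed.

Lemma qformZ {R : rcfType} {d : nat} (V : 'M[R]_d) (k : R) (x : 'cV[R]_d) :
  qform V (k *: x) = k ^+ 2 * qform V x.
Proof.
rewrite /qform linearZ /= [(k *: x)^T]linearZ /= -!scalemxAl.
by rewrite !mxE expr2 mulrA.
Qed.

Lemma qformB {R : rcfType} {d : nat} (V : 'M[R]_d) (x y : 'cV[R]_d) :
  V^T = V ->
  qform V (x - y) = qform V x - 2 * (x^T *m V *m y) 0 0 + qform V y.
Proof.
move=> sV.
have sym : (y^T *m V *m x) 0 0 = (x^T *m V *m y) 0 0.
  have T : (y^T *m V *m x)^T = x^T *m V *m y by rewrite !trmx_mul trmxK sV mulmxA.
  by rewrite -T [RHS]mxE.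
rewrite /qform [(x - y)^T]linearB /= !mulmxBl !mulmxBr.
rewrite !mxE; rewrite !mxE in sym; rewrite sym; ring.
Qed.

Theorem lemma1 (R : rcfType) (d : nat) (V : 'M[R]_d) (thetahat : 'cV[R]_d)
  (beta : R) :
  spd V -> 0 <= beta -> beta < mnorm V thetahat ->
  let phi := Num.sqrt (mnorm V thetahat ^+ 2 - beta ^+ 2) in
  0 < phi /\ ~ ellipsoid V thetahat beta 0 /\
  (forall theta : 'cV[R]_d, ellipsoid V thetahat beta theta ->
     mnorm V ((enorm theta)^-1 *: theta) <= mnorm (V *m V) thetahat / phi).
Proof.
move=> hV b0 hb phi.
have sV := proj1 hV.
set qb := qform V thetahat.
have qb0 : 0 <= qb := qform_ge0 V thetahat hV.
have mqb : mnorm V thetahat ^+ 2 = qb by rewrite /mnorm sqr_sqrtr.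
have bq : beta ^+ 2 < qb.
  by rewrite -mqb (ltrXn2r 2 b0 hb).
have phi0 : 0 < phi by rewrite /phi sqrtr_gt0 mqb subr_gt0.
have phi2 : phi ^+ 2 = qb - beta ^+ 2 by rewrite /phi mqb sqr_sqrtr // subr_ge0 ltW.
split => //; split.
  rewrite /ellipsoid sub0r -scaleN1r /mnorm qformZ sqrrN expr1n mul1r -/(mnorm V thetahat).
  by rewrite leNgt hb.
move=> theta; rewrite /ellipsoid /mnorm qformB // => hE.
set qa := qform V theta; set c := (theta^T *m V *m thetahat) 0 0.
have qa0 : 0 <= qa := qform_ge0 V theta hV.
have hE2 : qa - 2 * c + qb <= beta ^+ 2.
  have x0 : 0 <= qa - 2 * c + qb by rewrite /qa /qb /c -qformB //; apply: qform_ge0.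
  rewrite -(sqr_sqrtr x0) !expr2; apply: ler_pM => //; exact: sqrtr_ge0.
have amgm : Num.sqrt qa * phi <= c.
  have h1 := sqr_ge0 (Num.sqrt qa - phi).
  have sa : Num.sqrt qa ^+ 2 = qa by rewrite sqr_sqrtr.
  nra.
set w := V *m thetahat.
have cw : c = Bf theta w by rewrite /c /Bf /w mulmxA.
have ww : Bf w w = qform (V *m V) thetahat.
  by rewrite /Bf /qform /w trmx_mul sV !mulmxA.
have ee : enorm theta = Num.sqrt (Bf theta theta).
  by rewrite /enorm Bsum; congr Num.sqrt; apply: eq_bigr => i _; rewrite expr2.
have cs : c <= enorm theta * mnorm (V *m V) thetahat.
  rewrite ee /mnorm -ww -sqrtrM; last by rewrite Bsum; apply: sumr_ge0 => i _; apply: mul_self_ge0.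
  rewrite cw; apply: le_trans (ler_wsqrtr (CS theta w)).
  by rewrite sqrtr_sqr ler_norm.
have e0 : 0 <= enorm theta by apply: sqrtr_ge0.
rewrite qformZ -/qa.
have M0 : 0 <= mnorm (V *m V) thetahat by apply: sqrtr_ge0.
have [ez|ep] := eqVneq (enorm theta) 0.
  by rewrite ez invr0 expr0n /= mul0r sqrtr0 divr_ge0 // ltW.
have epos : 0 < enorm theta by rewrite lt_def ep e0.
rewrite sqrtrM ?sqr_ge0 // sqrtr_sqr ger0_norm ?invr_ge0 //.
rewrite ler_pdivlMr // -mulrA.
rewrite -(ler_pM2l epos) [_ * (_^-1 * _)]mulrA divff // mul1r.
exact: le_trans amgm cs.
Qed.
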